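(* Let $q\ge 2$ and $n\ge 1$ be integers, and let $[q]=\{0,1,\dots,q-1\}$. For every nonempty set $S\subseteq [q]^n$ one has $$|\Delta(S)|\ \ge\ \frac{\log |S|}{2\log(2nq)}.$$
   Context: For $x=(x_1,\dots,x_n),y=(y_1,\dots,y_n)\in[q]^n$, the Hamming distance is $d_H(x,y)=\#\{i: x_i\neq y_i\}$. For a set $S$, $\Delta(S)=\{d_H(x,y): x,y\in S\}$ is the set of Hamming distances determined by $S$ (pairs with $x=y$ allowed, so $0\in\Delta(S)$). Logarithms are to any fixed base greater than 1 (the bound is a ratio of logarithms). *)

(* Defs.v *)
From mathcomp Require Import all_boot all_order all_algebra.
From mathcomp Require Import all_classical all_reals all_analysis.
Set Implicit Arguments. Unset Strict Implicit. Unset Printing Implicit Defensive.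

Definition word (q n : nat) := {ffun 'I_n -> 'I_q}.

Definition hamming (q n : nat) (x y : word q n) : nat :=
  #|[set i : 'I_n | x i != y i]|.

(* Delta(S) = { d_H(x,y) : x, y in S } as a set of naturals (given as a seq,
   its cardinality is size of the undup'd list). *)
Definition dist_set (q n : nat) (S : {set word q n}) : seq nat :=
  undup [seq hamming x y | x <- enum S, y <- enum S].

(* Main.v *)
Require Import Defs.
From mathcomp Require Import all_boot all_order all_algebra.
From mathcomp Require Import all_classical all_reals all_analysis.
From mathcomp Require Import zify.
Set Implicit Arguments. Unset Strict Implicit. Unset Printing Implicit Defensive.
Import Order.TTheory GRing.Theory Num.Theory.
Local Open Scope ring_scope.

Section K.
Variable K : numFieldType.
Variables q n : nat.
Local Notation T := (word q n).
Local Notation V := {ffun T -> K^o}.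
Local Notation O := (option ('I_n * 'I_q)).

Definition gen (o : O) (z : T) : K :=
  if o is Some (i, a) then (z i == a)%:R else 1.
Definition gtu m (s : m.-tuple O) : V := [ffun z => \prod_(o <- s) gen o z].
Definition Gs m : seq V := map (@gtu m) (enum {: m.-tuple O}).
Definition Fx (l : seq nat) (x : T) : V :=
  [ffun z => \prod_(t <- l) (t%:R - (hamming x z)%:R)].

Lemma gtu_in m (s : m.-tuple O) : gtu s \in <<Gs m>>%VS.
Proof. by apply: memv_span; apply: map_f; rewrite mem_enum. Qed.

Lemma hamE (x z : T) : (hamming x z)%:R = n%:R - \sum_j ((z j == x j)%:R : K).
Proof.
have -> : hamming x z = (\sum_j (x j != z j))%N.
  rewrite /hamming -sum1_card big_mkcond /=; apply: eq_bigr => j _.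
  by rewrite inE; case: (x j != z j).
have -> : (n%:R : K) = \sum_(j < n) 1 by rewrite sumr_const card_ord.
rewrite natr_sum -sumrB.
apply: eq_bigr => j _; rewrite eq_sym; case: (z j == x j) => /=; rewrite ?subrr ?subr0 //.
Qed.

Lemma gtu_cons m (o : O) (s : m.-tuple O) z :
  gtu [tuple of o :: s] z = gen o z * gtu s z.
Proof. by rewrite !ffunE big_cons. Qed.

Lemma gtu_cons' m (t : m.+1.-tuple O) (o : O) (s : m.-tuple O) z :
  tval t = o :: s -> gtu t z = gen o z * gtu s z.
Proof. by move=> e; rewrite !ffunE e big_cons. Qed.

Lemma Fx_span l x : Fx l x \in <<Gs (size l)>>%VS.
Proof.
elim: l => [|t l IH].
  have -> : Fx [::] x = gtu [tuple]. by apply/ffunP=> z; rewrite !ffunE !big_nil.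
  exact: gtu_in.
set m := size l.
have -> : Fx (t :: l) x = [ffun z => (t%:R - (hamming x z)%:R) * Fx l x z].
  by apply/ffunP=> z; rewrite !ffunE big_cons.
have [c ->] : exists c : 'I_(size (Gs m)) -> K, Fx l x = \sum_i c i *: (Gs m)`_i.
  by exists (fun i => coord (in_tuple (Gs m)) i (Fx l x)); exact: (@coord_span _ _ _ (in_tuple (Gs m)) _ IH).
have -> : [ffun z => (t%:R - (hamming x z)%:R) * (\sum_i c i *: (Gs m)`_i) z]
   = \sum_i c i *: [ffun z => (t%:R - (hamming x z)%:R) * (Gs m)`_i z] :> V.
  apply/ffunP=> z; rewrite ffunE !sum_ffunE mulr_sumr; apply: eq_bigr => i _.
  by rewrite !ffunE mulrCA.
apply: rpred_sum => i _; apply: rpredZ.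
have /mapP [s _ ->] : (Gs m)`_i \in Gs m by apply: mem_nth.
have -> : [ffun z => (t%:R - (hamming x z)%:R) * gtu s z] =
   (t%:R - n%:R) *: gtu [tuple of None :: s] +
   \sum_j gtu [tuple of Some (j, x j) :: s] :> V.
  apply/ffunP=> z; rewrite !ffunE sum_ffunE hamE.
  rewrite big_cons /= mul1r -[(_ - n%:R) *: _]/(_ * _).
  have -> : \sum_j gtu [tuple of Some (j, x j) :: s] z
     = \sum_j (z j == x j)%:R * \prod_(o <- s) gen o z.
    by apply: eq_bigr => j _; rewrite (@gtu_cons' _ _ (Some (j, x j)) s) // ffunE.
  rewrite -mulr_suml -mulrDl; congr (_ * _).
  by rewrite opprD opprK addrA.
apply: rpredD; first by apply: rpredZ; apply: gtu_in.
by apply: rpred_sum => j _; apply: gtu_in.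
Qed.

Lemma ham0 (x : T) : hamming x x = 0%N.
Proof.
rewrite /hamming; apply/eqP; rewrite cards_eq0; apply/eqP/setP=> i.
by rewrite !inE eqxx.
Qed.

Lemma ham_neq0 (x y : T) : x != y -> hamming x y != 0%N.
Proof.
apply: contraNneq; rewrite /hamming => /eqP; rewrite cards_eq0 => /eqP h.
apply/eqP/ffunP => i; apply/eqP; apply: negbNE.
by move/setP/(_ i): h; rewrite !inE => ->.
Qed.

Lemma card_bound (S : {set T}) (D : seq nat) (x0 : T) :
  (forall x y, x \in S -> y \in S -> x != y -> hamming x y \in D) ->
  (forall t, t \in D -> t != 0%N) ->
  (#|S| <= (n * q).+1 ^ size D)%N.
Proof.
move=> HD HD0.
set xs := enum S.
set X := [seq Fx D x | x <- xs].
have sub : (<<X>> <= <<Gs (size D)>>)%VS.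
  by apply/span_subvP => f /mapP [x _ ->]; exact: Fx_span.
have fr : free X.
  apply/(@freeP _ _ _ (in_tuple X)) => k Hk i.
  have hi : (i < size xs)%N by rewrite -(size_map (Fx D)); exact: ltn_ord.
  have := congr1 (fun f : V => f (nth x0 xs i)) Hk.
  rewrite sum_ffunE ffunE (bigD1 i) //= big1.
    rewrite addr0 ffunE (nth_map x0) // ffunE ham0 => /eqP.
    rewrite -[k i *: _]/(_ * _) mulf_eq0 => /orP [/eqP //|].
    rewrite prodf_seq_eq0 => /hasP [t /HD0 tn0]; rewrite subr0 pnatr_eq0.
    by rewrite (negbTE tn0).
  move=> j jni; rewrite ffunE.
  have hj : (j < size xs)%N by rewrite -(size_map (Fx D)); exact: ltn_ord.
  rewrite (nth_map x0) // ffunE -[k j *: _]/(_ * _).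
  have tD : hamming (nth x0 xs j) (nth x0 xs i) \in D.
    have inS : forall j, (j < size xs)%N -> nth x0 xs j \in S.
      by move=> j' hj'; rewrite -mem_enum mem_nth.
    apply: HD; rewrite ?inS //.
    by rewrite nth_uniq ?enum_uniq //.
  by rewrite (big_rem _ tD) /= subrr mul0r mulr0.
have := dimvS sub; rewrite (eqnP fr) size_map -cardE => h.
apply: (leq_trans h); apply: (leq_trans (dim_span _)).
by rewrite size_map -cardE card_tuple card_option card_prod !card_ord.
Qed.

End K.

Theorem theorem1p2 (R : realType) (q n : nat) (hq : (2 <= q)%N) (hn : (1 <= n)%N)
  (S : {set word q n}) (hS : (0 < #|S|)%N) :
  ln (#|S|%:R : R) / (2 * ln ((2 * n * q)%:R : R)) <= (size (dist_set S))%:R.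
Proof.
case/card_gt0P: (hS) => x0 _.
set D := [seq t <- dist_set S | t != 0%N].
have HB : (#|S| <= (n * q).+1 ^ size D)%N.
  apply: (@card_bound R q n S D x0).
    move=> x y xS yS xy; rewrite mem_filter ham_neq0 // mem_undup.
    by apply: allpairs_f; rewrite mem_enum.
  by move=> t; rewrite mem_filter => /andP [].
have hD : (size D <= size (dist_set S))%N by rewrite size_filter count_size.
set d := size (dist_set S).
set k := size D.
have L0 : 0 < ln ((2 * n * q)%:R : R) by apply: ln_gt0; rewrite ltr1n; lia.
rewrite ler_pdivrMr ?mulr_gt0 //.
have h1 : ln (#|S|%:R : R) <= ln (((n * q).+1 ^ k)%:R : R).
  by rewrite ler_ln ?posrE ?ltr0n ?expn_gt0 // ler_nat.
apply: (le_trans h1); rewrite natrX lnXn ?ltr0n //.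
have h2 : ln ((n * q).+1%:R : R) <= ln ((2 * n * q)%:R : R).
  by rewrite ler_ln ?posrE ?ltr0n ?ler_nat; lia.
apply: (le_trans (ler_wMn2r k h2)).
rewrite -[ln _ *+ k]mulr_natl mulrA -natrM.
apply: ler_wpM2r; first exact: ltW.
by rewrite ler_nat; lia.
Qed.
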